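(* For every integer $k\ge 3$, the consensus number of the $\text{WRN}_{k}$ object is $1$.
   Context: A $\text{WRN}_{k}$ (Write and Read Next) object is a deterministic atomic shared object with a single operation $\texttt{WRN}(i,v)$, where $i\in\{0,\dots,k-1\}$ and $v\neq\bot$. Its state consists of $k$ values $A[0],\dots,A[k-1]$, initially all $\bot$; the operation $\texttt{WRN}(i,v)$ atomically sets $A[i]\gets v$ and returns $A[(i+1)\bmod k]$. Model: asynchronous shared memory, processes communicate by atomic operations on shared objects and may crash. Consensus task: each process has an input; every non-faulty process outputs a value such that every output is some process's input and all outputs are equal. An object has consensus number $n$ if there is a wait-free algorithm using only copies of the object and read-write registers solving consensus for $n$ processes, but no such algorithm for $n+1$ processes (wait-free: each non-crashed process outputs within finitely many of its own steps). *)

(* Defs.v *)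
From mathcomp Require Import all_boot.
Set Implicit Arguments. Unset Strict Implicit. Unset Printing Implicit Defensive.

(* State: A : 'I_k -> option Val  (None plays the role of bot).
   WRN(i, v) (v <> bot, i.e. v : Val) atomically sets A[i] <- v and
   returns A[(i+1) mod k]  (ordS i is (i+1) mod k in 'I_k). *)
Definition wrn_apply (k : nat) (Val : Type) (A : 'I_k -> option Val)
    (i : 'I_k) (v : Val) : ('I_k -> option Val) * option Val :=
  let A' := fun j : 'I_k => if j == i then Some v else A j in
  (A', A' (ordS i)).

Inductive action (k : nat) (In Val : Type) (RegObj WrnObj : Type) :=
  | Decide of In
  | Read of RegObj
  | Write of RegObj & Val
  | WRN of WrnObj & 'I_k & Val.

(* Responses: read returns Some v, write returns None (ack), WRN returns the
   (possibly bot) value read. Decide is terminal. *)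
Unset Implicit Arguments.
Record algorithm (k n : nat) (In : Type) := Algorithm {
  Val : Type;
  RegObj : eqType;
  WrnObj : eqType;
  reg_init : RegObj -> Val;
  Loc : Type;
  init : 'I_n -> In -> Loc;
  act : 'I_n -> Loc -> action k In Val RegObj WrnObj;
  upd : 'I_n -> Loc -> option Val -> Loc
}.
Arguments Val {k n In}.
Arguments RegObj {k n In}.
Arguments WrnObj {k n In}.
Arguments reg_init {k n In}.
Arguments Loc {k n In}.
Arguments init {k n In}.
Arguments act {k n In}.
Arguments upd {k n In}.
Set Implicit Arguments.

Section Semantics.
Variables (k n : nat) (In : Type) (A : algorithm k n In).

Record config := Config {
  loc : 'I_n -> Loc A;
  regs : RegObj A -> Val A;
  wrns : WrnObj A -> 'I_k -> option (Val A)
}.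

Definition init_config (inp : 'I_n -> In) : config :=
  Config (fun p => init A p (inp p)) (reg_init A) (fun _ _ => None).

Definition set_loc (c : config) (p : 'I_n) (s : Loc A) : 'I_n -> Loc A :=
  fun q => if q == p then s else loc c q.

Definition step (c : config) (p : 'I_n) : config :=
  let s := loc c p in
  match act A p s with
  | Decide _ => c
  | Read r =>
      Config (set_loc c p (upd A p s (Some (regs c r)))) (regs c) (wrns c)
  | Write r v =>
      Config (set_loc c p (upd A p s None))
             (fun r' => if r' == r then v else regs c r') (wrns c)
  | WRN w i v =>
      let res := wrn_apply (wrns c w) i v in
      Config (set_loc c p (upd A p s res.2)) (regs c)
             (fun w' => if w' == w then res.1 else wrns c w')
  end.

(* Execution with inputs inp under schedule sched (sched t is the process
   taking the t-th step; a crashed process is one scheduled finitely often). *)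
Fixpoint run (inp : 'I_n -> In) (sched : nat -> 'I_n) (t : nat) : config :=
  match t with
  | 0 => init_config inp
  | t'.+1 => step (run inp sched t') (sched t')
  end.

Definition decided (c : config) (p : 'I_n) (d : In) : Prop :=
  act A p (loc c p) = Decide _ _ _ _ d.

Definition solves_consensus : Prop :=
  (forall inp sched t p d, decided (run inp sched t) p d -> exists q, d = inp q) /\
  (forall inp sched t p q dp dq,
      decided (run inp sched t) p dp -> decided (run inp sched t) q dq -> dp = dq) /\
  (* wait-freedom: every non-crashed process (one taking infinitely many
     steps) outputs within finitely many steps *)
  (forall inp sched p, (forall t, exists2 t', t <= t' & sched t' = p) ->
      exists t d, decided (run inp sched t) p d).

End Semantics.

Definition consensus_solvable (k n : nat) (In : Type) : Prop :=
  exists A : algorithm k n In, solves_consensus A.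

Definition consensus_number (k n : nat) : Prop :=
  (forall In : Type, consensus_solvable k n In) /\
  (forall In : Type, (exists x y : In, x <> y) -> ~ consensus_solvable k n.+1 In).

(* Main.v *)
Require Import Defs.
From mathcomp Require Import all_boot.
From mathcomp Require Import zify.
From Stdlib Require Import Classical IndefiniteDescription FunctionalExtensionality.
Set Implicit Arguments. Unset Strict Implicit. Unset Printing Implicit Defensive.
Section Gen.
Variables (k n : nat) (In : Type) (A : algorithm k n In).

Implicit Types (c : config A) (p q r : 'I_n).
Definition exec (c : config A) (l : seq 'I_n) := foldl (@step _ _ _ A) c l.

Lemma run_exec inp s t : run A inp s t = exec (init_config A inp) (mkseq s t).
Proof. elim: t => [//|t IH]. rewrite [run _ _ _ _]/= mkseqS /exec foldl_rcons IH.
done. Qed.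

Lemma nseqSr (T : Type) (q : T) m : rcons (nseq m q) q = nseq m.+1 q.
Proof. by elim: m => //= m ->. Qed.

Lemma mkseq_nth_nseq (T : Type) (q : T) l m : mkseq (nth q l) (size l + m) = l ++ nseq m q.
Proof.
elim: m => [|m IH]; first by rewrite addn0 cats0 mkseq_nth.
by rewrite addnS mkseqS IH nth_default ?leq_addr // -nseqSr rcons_cat.
Qed.

Lemma step_other c p q : q != p -> loc (step c p) q = loc c q.
Proof. move=> hqp; rewrite /step; case: act => * /=; by rewrite /set_loc ?(negbTE hqp). Qed.

Lemma dec_step c p r d : decided c p d -> decided (step c r) p d.
Proof.
move=> H; case: (eqVneq p r) => [<-|hpr].
  by rewrite /step H.
by rewrite /decided step_other.
Qed.

Lemma dec_exec c l p d : decided c p d -> decided (exec c l) p d.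
Proof. elim: l c => [//|r l IH] c H /=; apply: IH; exact: dec_step. Qed.

Lemma dec_run inp s t j p d : decided (run A inp s t) p d -> decided (run A inp s (t + j)) p d.
Proof. elim: j => [|j IH]; first by rewrite addn0. move=> H; rewrite addnS /=; exact: dec_step (IH H). Qed.

Definition sim q (c c' : config A) :=
  loc c q = loc c' q /\ regs c = regs c' /\ wrns c = wrns c'.

Lemma sim_sym q c c' : sim q c c' -> sim q c' c.
Proof. by rewrite /sim => -[-> [-> ->]]. Qed.

Lemma sim_step q c c' : sim q c c' -> sim q (step c q) (step c' q).
Proof.
case: c => L R W; case: c' => L' R' W' [/= E [-> ->]].
rewrite /step /= E; case: act => * /=; rewrite /sim /set_loc /= ?eqxx //.
Qed.

Lemma sim_exec q c c' m : sim q c c' -> sim q (exec c (nseq m q)) (exec c' (nseq m q)).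
Proof. elim: m c c' => [//|m IH] c c' H /=; apply: IH; exact: sim_step. Qed.

Lemma sim_decided q c c' d : sim q c c' -> decided c q d -> decided c' q d.
Proof. by case=> E _; rewrite /decided E. Qed.

Section Cons.
Hypothesis Hsol : solves_consensus A.
Variable inp : 'I_n -> In.
Let c0 := init_config A inp.

Lemma valid l p d : decided (exec c0 l) p d -> exists q, d = inp q.
Proof.
move=> H; case: Hsol => Hv _; apply: (Hv inp (nth p l) (size l) p).
by rewrite run_exec mkseq_nth.
Qed.

Lemma agree l p q dp dq : decided (exec c0 l) p dp -> decided (exec c0 l) q dq -> dp = dq.
Proof.
move=> H1 H2; case: Hsol => _ [Ha _]; apply: (Ha inp (nth p l) (size l) p q);
by rewrite run_exec mkseq_nth.
Qed.

Lemma wf l q : exists m d, decided (exec c0 (l ++ nseq m q)) q d.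
Proof.
case: Hsol => _ [_ Hw].
have fair : forall t, exists2 t', t <= t' & nth q l t' = q.
  move=> t; exists (t + size l); first exact: leq_addr.
  by rewrite nth_default // leq_addl.
case: (Hw inp (nth q l) q fair) => t [d Hd].
exists (t - size l), d.
have := dec_run (size l - t) Hd.
have -> : t + (size l - t) = size l + (t - size l).
  by lia.
by rewrite run_exec mkseq_nth_nseq.
Qed.

End Cons.
End Gen.
Unset Implicit Arguments. Set Strict Implicit.
Section Cases.
Variables (k n : nat) (In : Type) (A : algorithm k n In).
Hypothesis hk : 2 < k.
Implicit Types (c : config A) (p q r : 'I_n).

Lemma valS (i : 'I_k) : nat_of_ord (ordS i) = if i.+1 < k then i.+1 else 0.
Proof.
rewrite /=; case: ifP => h; first by rewrite modn_small.
have e : i.+1 = k by have := ltn_ord i; move: h; lia.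
by rewrite e modnn.
Qed.
Lemma ordS_neq (i : 'I_k) : ordS i != i.
Proof. apply/eqP => /(congr1 (@nat_of_ord k)); rewrite valS. have := ltn_ord i. case: ifP; lia. Qed.
Lemma ordSS_neq (i : 'I_k) : ordS (ordS i) != i.
Proof. apply/eqP => /(congr1 (@nat_of_ord k)); rewrite !valS. have := ltn_ord i. case: ifP; case: ifP; lia. Qed.

Definition AB p q c := sim q (step (step c p) q) (step c q) \/
                       sim q (step (step c p) q) (step (step c q) p).

Lemma cases c p q : p != q -> AB p q c \/ AB q p c.
Proof.
move=> hpq; have hqp : q != p by rewrite eq_sym.
case: c => L R W.
case Hp: (act A p (L p)) => [dp|rp|rp vp|wp ip vp];
case Hq: (act A q (L q)) => [dq|rq|rq vq|wq iq vq];
rewrite /AB /sim /step /= ?Hp ?Hq /set_loc /= ?(negbTE hpq) ?(negbTE hqp) ?Hp ?Hq /= ?eqxx.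
all: rewrite ?(negbTE hpq) ?(negbTE hqp) /=.
all: first [ by left; left; repeat split | by left; right; repeat split | by right; left; repeat split | by right; right; repeat split | idtac ].
- case: (eqVneq rp rq) => [->|hne].
    left; left; split=> //; split=> //; apply: functional_extensionality => r'; by case: (r' == rq).
  left; right; split=> //; split=> //; apply: functional_extensionality => r'.
  case: (eqVneq r' rq) => [->|_] /=; first by rewrite eq_sym (negbTE hne).
  done.
- case: (eqVneq wq wp) => [E|hw].
    subst wq; 
    case: (eqVneq iq ip) => [E|hi].
      subst iq; left; left; rewrite (negbTE (ordS_neq ip)); split=> //; split=> //.
      apply: functional_extensionality => w' /=; case: (w' == wp) => //.
      apply: functional_extensionality => j /=; by case: (j == ip).
    case: (eqVneq ip (ordS iq)) => [E|hs].
      right; right; subst ip; rewrite (negbTE (ordS_neq _)) (negbTE (ordSS_neq _)).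
      split=> //; split=> //.
      apply: functional_extensionality => w' /=; case: (w' == wp) => //.
      apply: functional_extensionality => j.
      case: (eqVneq j iq) => [->|//]; by rewrite (negbTE hi).
    left; right; have hs' : ordS iq != ip by rewrite eq_sym.
    rewrite (negbTE (ordS_neq _)) ?(negbTE hs').
    split=> //; split=> //.
    apply: functional_extensionality => w' /=; case: (w' == wp) => //.
    apply: functional_extensionality => j.
    case: (eqVneq j iq) => [->|//]; by rewrite (negbTE hi).
  left; right; have hw' : wp != wq by rewrite eq_sym.
  rewrite ?(negbTE hw) ?(negbTE hw').
  split=> //; split=> //.
  apply: functional_extensionality => w'.
  case: (eqVneq w' wq) => [->|_] //; by rewrite (negbTE hw).
Qed.
End Cases.
Set Implicit Arguments. Unset Strict Implicit.
Section Two.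
Variables (k : nat) (In : Type) (A : algorithm k 2 In).
Hypothesis hk : 2 < k.
Hypothesis Hsol : solves_consensus A.
Variables (x y : In).
Hypothesis hxy : x <> y.
Implicit Types (c : config A) (p q r : 'I_2).

Let p0 : 'I_2 := ord0.
Let p1 : 'I_2 := ord_max.
Lemma two_cases (p : 'I_2) : p = p0 \/ p = p1.
Proof. case: p => [[|[|m]] H]; [left|right|by []]; exact: val_inj. Qed.

Let inp : 'I_2 -> In := fun p => if p == p0 then x else y.
Let c0 := init_config A inp.

Definition Dec c v := exists l p, decided (exec c l) p v.
Definition Biv c := Dec c x /\ Dec c y.
Definition reach c := exists l, c = exec c0 l.

Lemma reach_exec c l : reach c -> reach (exec c l).
Proof. case=> l0 ->; exists (l0 ++ l); by rewrite /exec foldl_cat. Qed.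

Lemma reach_step c r : reach c -> reach (step c r).
Proof. move=> H; exact: (reach_exec [:: r] H). Qed.

Lemma Dec_exec c l v : Dec (exec c l) v -> Dec c v.
Proof. case=> l1 [p H]; exists (l ++ l1), p; by rewrite /exec foldl_cat. Qed.

Lemma Dec_valid c v : reach c -> Dec c v -> v = x \/ v = y.
Proof.
case=> l0 -> [l [p H]]; move: H; rewrite /exec -foldl_cat => H.
case: (valid Hsol H) => q ->; rewrite /inp; case: (q == p0); by [left|right].
Qed.

Lemma Biv_nodec c p d : reach c -> Biv c -> decided c p d -> False.
Proof.
move=> [l0 E] [[l1 [q1 H1]] [l2 [q2 H2]]] Hd.
have a1 : d = x.
  have Hd1 := dec_exec l1 Hd; move: Hd1 H1; rewrite E /exec -!foldl_cat => Hd1 H1.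
  exact: (agree Hsol Hd1 H1).
have a2 : d = y.
  have Hd2 := dec_exec l2 Hd; move: Hd2 H2; rewrite E /exec -!foldl_cat => Hd2 H2.
  exact: (agree Hsol Hd2 H2).
by apply: hxy; rewrite -a1 -a2.
Qed.

Lemma solo_sim q X Y : reach Y -> sim q X Y -> exists v, Dec X v /\ Dec Y v.
Proof.
move=> [l0 E] S.
case: (wf Hsol inp l0 q) => m [d Hd].
have HY : decided (exec Y (nseq m q)) q d by rewrite E /exec -foldl_cat.
exists d; split; last by exists (nseq m q), q.
exists (nseq m q), q; apply: sim_decided HY; apply: sim_sym; exact: sim_exec.
Qed.

Lemma crit_contra c p q v : reach c -> Dec (step c p) v -> Dec (step c q) v ->
  ~ Dec (step c p) y -> ~ Dec (step c q) x -> False.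
Proof.
move=> Hc H1 H2 N1 N2.
case: (Dec_valid (reach_step p Hc) H1) => E; subst v; [exact: N2 | exact: N1].
Qed.

Lemma critical c p q : reach c -> p != q -> ~ Dec (step c p) y -> ~ Dec (step c q) x -> False.
Proof.
move=> Hc hpq N1 N2.
case: (@cases _ _ _ _ hk c p q hpq) => [[S|S]|[S|S]].
- case: (solo_sim (reach_step q Hc) S) => v [D1 D2].
  exact: (crit_contra Hc (Dec_exec (l := [:: q]) D1) D2 N1 N2).
- have R2 : reach (step (step c q) p) by apply/reach_step/reach_step.
  case: (solo_sim R2 S) => v [D1 D2].
  exact: (crit_contra Hc (Dec_exec (l := [:: q]) D1) (Dec_exec (l := [:: p]) D2) N1 N2).
- case: (solo_sim (reach_step p Hc) S) => v [D1 D2].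
  exact: (crit_contra Hc D2 (Dec_exec (l := [:: p]) D1) N1 N2).
- have R2 : reach (step (step c p) q) by apply/reach_step/reach_step.
  case: (solo_sim R2 S) => v [D1 D2].
  exact: (crit_contra Hc (Dec_exec (l := [:: q]) D2) (Dec_exec (l := [:: p]) D1) N1 N2).
Qed.

Lemma succ c : reach c -> Biv c -> exists r, Biv (step c r).
Proof.
move=> Hc Hb; have Hb' := Hb; case: Hb' => [[l1 [q1 H1]] [l2 [q2 H2]]].
case: l1 H1 => [|r1 l1] H1; first by case: (Biv_nodec Hc Hb H1).
case: l2 H2 => [|r2 l2] H2; first by case: (Biv_nodec Hc Hb H2).
have D1 : Dec (step c r1) x by exists l1, q1.
have D2 : Dec (step c r2) y by exists l2, q2.
case: (classic (Dec (step c r1) y)) => N1; first by exists r1.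
case: (classic (Dec (step c r2) x)) => N2; first by exists r2.
case: (eqVneq r1 r2) => [E|hne]; first by subst r2.
by case: (critical Hc hne N1 N2).
Qed.

Lemma init_biv : Biv c0.
Proof.
have solo : forall (z : In) (p : 'I_2), inp p = z -> Dec c0 z.
  move=> z p hz.
  case: (wf Hsol (fun _ => z) [::] p) => m [d Hd].
  case: (valid Hsol Hd) => _ Ed; subst d.
  exists (nseq m p), p; apply: sim_decided Hd; apply: sim_exec.
  by rewrite /sim /= hz.
split; [apply: (solo x p0) | apply: (solo y p1)]; by rewrite /inp.
Qed.

Lemma impossible : False.
Proof.
have H : forall c, exists r, (reach c /\ Biv c) -> Biv (step c r).
  move=> c; case: (classic (reach c /\ Biv c)) => [[Hc Hb]|N].
    by case: (succ Hc Hb) => r Hr; exists r.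
  by exists p0.
pose g c := proj1_sig (constructive_indefinite_description _ (H c)).
have Hg : forall c, reach c -> Biv c -> Biv (step c (g c)).
  move=> c Hc Hb; rewrite /g; case: constructive_indefinite_description => r /=; auto.
pose fix cfg t := if t is t'.+1 then step (cfg t') (g (cfg t')) else c0.
pose sched t := g (cfg t).
have Erun : forall t, run A inp sched t = cfg t by elim=> //= t ->.
have Rc : forall t, reach (cfg t).
  move=> t; exists (mkseq sched t); by rewrite -Erun run_exec.
have Bc : forall t, Biv (cfg t).
  elim=> [|t IH]; [exact: init_biv | exact: Hg (Rc t) IH].
have never : forall p, (forall t, exists2 t', t <= t' & sched t' = p) -> False.
  move=> p fair; case: Hsol => _ [_ Hw].
  case: (Hw inp sched p fair) => t [d Hd]; rewrite Erun in Hd.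
  exact: Biv_nodec (Rc t) (Bc t) Hd.
apply: (never p0) => t.
apply: NNPP => N.
apply: (never p1) => u; exists (u + t); first exact: leq_addr.
case: (two_cases (sched (u + t))) => // E.
case: N; exists (u + t) => //; exact: leq_addl.
Qed.

End Two.

Theorem corollary2 : forall k : nat, 3 <= k -> consensus_number k 1.
Proof.
move=> k hk; split.
- move=> In.
  pose A := @Algorithm k 1 In unit unit unit (fun _ => tt) In (fun _ z => z)
              (fun _ s => Decide _ _ _ _ s) (fun _ s _ => s).
  exists A.
  have Er : forall inp sched t, run A inp sched t = init_config A inp by move=> inp sched; elim=> //= t ->.
  split; [|split].
  + move=> inp sched t p d; rewrite Er /decided /= => [[<-]]; by exists p.
  + move=> inp sched t p q dp dq; rewrite Er /decided /= => [[<-]] [<-].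
    by rewrite (ord1 p) (ord1 q).
  + move=> inp sched p _; exists 0, (inp p); by [].
- move=> In [x [y hxy]] [A HA].
  exact: (impossible hk HA hxy).
Qed.
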